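(* Let $(A,\cdot,\circ)$ be a skew brace and $B$, $C$ sub-skew braces with $A = B\cdot C$ and $A = B\circ C$. If both $B$ and $C$ are trivial skew braces, then $A*A = (B*C)\cdot(C*B)$.
   Context: A skew brace is a set $A$ with two group operations $\cdot$ (often written by juxtaposition) and $\circ$ such that $a\circ(bc) = (a\circ b)\,a^{-1}\,(a\circ c)$ for all $a,b,c\in A$. $a^{-1}$ denotes the inverse in $(A,\cdot)$. Define $a*b = a^{-1}(a\circ b)b^{-1}$; for subsets $X,Y$, $X*Y$ is the subgroup of $(A,\cdot)$ generated by all $x*y$ ($x\in X,y\in Y$). A sub-skew brace is a subset that is a subgroup of both groups; it is trivial if $a\circ b=ab$ for all its elements. $A=B\cdot C$ (resp. $A=B\circ C$) means every element is $bc$ (resp. $b\circ c$) with $b\in B$, $c\in C$. *)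

(* Defs.v *)
Record SkewBrace := {
  carrier :> Type;
  mul : carrier -> carrier -> carrier;
  inv : carrier -> carrier;
  one : carrier;
  circ : carrier -> carrier -> carrier;
  cinv : carrier -> carrier;
  cone : carrier;
  mulA : forall a b c, mul a (mul b c) = mul (mul a b) c;
  mul1x : forall a, mul one a = a;
  mulx1 : forall a, mul a one = a;
  mulVx : forall a, mul (inv a) a = one;
  mulxV : forall a, mul a (inv a) = one;
  circA : forall a b c, circ a (circ b c) = circ (circ a b) c;
  circ1x : forall a, circ cone a = a;
  circx1 : forall a, circ a cone = a;
  circVx : forall a, circ (cinv a) a = cone;
  circxV : forall a, circ a (cinv a) = cone;
  brace_compat : forall a b c,
    circ a (mul b c) = mul (mul (circ a b) (inv a)) (circ a c)
}.

Arguments mul {s}.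
Arguments inv {s}.
Arguments one {s}.
Arguments circ {s}.
Arguments cinv {s}.
Arguments cone {s}.

Section Defs.
Variable A : SkewBrace.

Definition subset := A -> Prop.

Definition is_mul_subgroup (H : subset) : Prop :=
  H one /\ (forall x y, H x -> H y -> H (mul x y)) /\ (forall x, H x -> H (inv x)).

Definition is_circ_subgroup (H : subset) : Prop :=
  H cone /\ (forall x y, H x -> H y -> H (circ x y)) /\ (forall x, H x -> H (cinv x)).

Definition is_sub_skew_brace (B : subset) : Prop :=
  is_mul_subgroup B /\ is_circ_subgroup B.

Definition is_trivial_on (B : subset) : Prop :=
  forall a b, B a -> B b -> circ a b = mul a b.

Definition star (a b : A) : A := mul (mul (inv a) (circ a b)) (inv b).

Definition gen_mul_subgroup (S : subset) : subset :=
  fun x => forall H : subset, is_mul_subgroup H -> (forall s, S s -> H s) -> H x.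

Definition star_set (X Y : subset) : subset :=
  gen_mul_subgroup (fun z => exists x y, X x /\ Y y /\ z = star x y).

Definition mul_set (X Y : subset) : subset :=
  fun z => exists x y, X x /\ Y y /\ z = mul x y.

Definition circ_set (X Y : subset) : subset :=
  fun z => exists x y, X x /\ Y y /\ z = circ x y.

Definition full_set : subset := fun _ => True.

End Defs.

Arguments star {A}.
Arguments star_set {A}.
Arguments mul_set {A}.
Arguments circ_set {A}.
Arguments full_set {A}.
Arguments is_sub_skew_brace {A}.
Arguments is_trivial_on {A}.

(* Main.v *)
Require Import Defs.

Section G.
Variable A : SkewBrace.

Lemma mulA' (a b c : A) : mul (mul a b) c = mul a (mul b c).
Proof. symmetry; apply mulA. Qed.
Lemma mulKV (x y : A) : mul x (mul (inv x) y) = y.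
Proof. rewrite mulA, mulxV, mul1x; reflexivity. Qed.
Lemma mulVK (x y : A) : mul (inv x) (mul x y) = y.
Proof. rewrite mulA, mulVx, mul1x; reflexivity. Qed.
Lemma inv_uniq (x y : A) : mul x y = one -> inv x = y.
Proof. intro H. rewrite <- (mulx1 _ (inv x)), <- H, mulVK. reflexivity. Qed.
Lemma inv_inv (x : A) : inv (inv x) = x.
Proof. apply inv_uniq. apply mulVx. Qed.
Lemma inv_mul (x y : A) : inv (mul x y) = mul (inv y) (inv x).
Proof. apply inv_uniq. rewrite mulA', mulKV, mulxV. reflexivity. Qed.
Lemma inv_one : inv (@one A) = one.
Proof. apply inv_uniq. apply mul1x. Qed.

Ltac gsimp := repeat progress rewrite ?mulA', ?mulKV, ?mulVK, ?mul1x, ?mulx1,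
   ?mulxV, ?mulVx, ?inv_mul, ?inv_inv, ?inv_one.

Definition lam (a x : A) := mul (inv a) (circ a x).

Lemma lam_mul (a x y : A) : lam a (mul x y) = mul (lam a x) (lam a y).
Proof. unfold lam. rewrite brace_compat. gsimp. reflexivity. Qed.

Lemma lam_one (a : A) : lam a one = one.
Proof.
  assert (H := lam_mul a one one). rewrite mul1x in H.
  assert (H2 : mul (inv (lam a one)) (lam a one) = mul (inv (lam a one)) (mul (lam a one) (lam a one))) by (f_equal; exact H).
  rewrite mulVK, mulVx in H2. symmetry; exact H2.
Qed.

Lemma lam_inv (a x : A) : lam a (inv x) = inv (lam a x).
Proof.
  symmetry. apply inv_uniq. rewrite <- lam_mul, mulxV. apply lam_one.
Qed.

Lemma lam_circ (a b c : A) : lam (circ a b) c = lam a (lam b c).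
Proof.
  assert (H := lam_mul a b (lam b c)).
  assert (E : mul b (lam b c) = circ b c) by (unfold lam; gsimp; reflexivity).
  rewrite E in H.
  assert (H2 : lam a (lam b c) = mul (inv (lam a b)) (lam a (circ b c)))
    by (rewrite H; gsimp; reflexivity).
  rewrite H2. unfold lam. rewrite circA. gsimp. reflexivity.
Qed.

Lemma star_lam (a b : A) : star a b = mul (lam a b) (inv b).
Proof. reflexivity. Qed.

Lemma star_mul (a x y : A) :
  star a (mul x y) = mul (star a x) (mul x (mul (star a y) (inv x))).
Proof. rewrite !star_lam, lam_mul. gsimp. reflexivity. Qed.

Lemma star_circ (a b c : A) :
  star (circ a b) c = mul (star a (star b c)) (mul (star b c) (star a c)).
Proof.
  rewrite !star_lam, lam_circ, lam_mul, lam_inv. gsimp. reflexivity.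
Qed.

Lemma gen_sub (S : subset A) s : S s -> gen_mul_subgroup A S s.
Proof. intros Hs H _ HS. apply HS, Hs. Qed.

Lemma gen_sg (S : subset A) : is_mul_subgroup A (gen_mul_subgroup A S).
Proof.
  split; [|split].
  - intros H [H1 _] _. exact H1.
  - intros x y Hx Hy H HH HS. destruct HH as [H1 [H2 H3]].
    apply H2; [apply Hx|apply Hy]; try split; auto.
  - intros x Hx H HH HS. destruct HH as [H1 [H2 H3]].
    apply H3; apply Hx; try split; auto.
Qed.

Lemma gen_mul (S : subset A) x y :
  gen_mul_subgroup A S x -> gen_mul_subgroup A S y -> gen_mul_subgroup A S (mul x y).
Proof. destruct (gen_sg S) as [_ [H _]]; auto. Qed.
Lemma gen_inv (S : subset A) x :
  gen_mul_subgroup A S x -> gen_mul_subgroup A S (inv x).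
Proof. destruct (gen_sg S) as [_ [_ H]]; auto. Qed.
Lemma gen_one (S : subset A) : gen_mul_subgroup A S one.
Proof. destruct (gen_sg S) as [H _]; auto. Qed.

Lemma gen_normal (S : subset A) :
  (forall g s, S s -> gen_mul_subgroup A S (mul g (mul s (inv g)))) ->
  forall g x, gen_mul_subgroup A S x -> gen_mul_subgroup A S (mul g (mul x (inv g))).
Proof.
  intros HS g x Hx.
  apply (Hx (fun x => gen_mul_subgroup A S (mul g (mul x (inv g))))).
  - split; [|split].
    + gsimp. apply gen_one.
    + intros u v Hu Hv.
      replace (mul g (mul (mul u v) (inv g))) with
        (mul (mul g (mul u (inv g))) (mul g (mul v (inv g)))) by (gsimp; reflexivity).
      apply gen_mul; auto.
    + intros u Hu.
      replace (mul g (mul (inv u) (inv g))) with (inv (mul g (mul u (inv g))))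
        by (gsimp; reflexivity).
      apply gen_inv; auto.
  - intros s Hs. apply HS, Hs.
Qed.

Lemma gen_mono (S T : subset A) :
  (forall s, S s -> T s) -> forall x, gen_mul_subgroup A S x -> gen_mul_subgroup A T x.
Proof.
  intros HST x Hx. apply Hx. apply gen_sg. intros s Hs. apply gen_sub, HST, Hs.
Qed.

End G.

Ltac gsimp := repeat progress rewrite ?mulA', ?mulKV, ?mulVK, ?mul1x, ?mulx1,
   ?mulxV, ?mulVx, ?inv_mul, ?inv_inv, ?inv_one.

Theorem proposition3p3 (A : SkewBrace) (B C : A -> Prop) :
  is_sub_skew_brace B -> is_sub_skew_brace C ->
  (forall a : A, mul_set B C a) ->
  (forall a : A, circ_set B C a) ->
  is_trivial_on B -> is_trivial_on C ->
  forall a : A,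
    star_set full_set full_set a <->
    mul_set (star_set B C) (star_set C B) a.
Proof.
  intros [[B1 [BM BI]] _] [[C1 [CM CI]] _] HBC HcBC TB TC.
  assert (HCB : forall a : A, exists c b, C c /\ B b /\ a = mul c b).
  { intro a. destruct (HBC (inv a)) as [b [c [Hb [Hc E]]]].
    exists (inv c), (inv b). split; [auto|split;[auto|]].
    rewrite <- (inv_inv A a), E. gsimp. reflexivity. }
  assert (TBs : forall b b', B b -> B b' -> star b b' = one).
  { intros b b' Hb Hb'. unfold star. rewrite TB by auto. gsimp. reflexivity. }
  assert (TCs : forall c c', C c -> C c' -> star c c' = one).
  { intros c c' Hc Hc'. unfold star. rewrite TC by auto. gsimp. reflexivity. }
  assert (SBC : forall b z, B b -> star_set B C (star b z)).
  { intros b z Hb. destruct (HCB z) as [c [b' [Hc [Hb' E]]]]. subst z.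
    rewrite star_mul, (TBs b b') by auto. gsimp.
    apply gen_sub. exists b, c. auto. }
  assert (SCB : forall c z, C c -> star_set C B (star c z)).
  { intros c z Hc. destruct (HBC z) as [b [c' [Hb [Hc' E]]]]. subst z.
    rewrite star_mul, (TCs c c') by auto. gsimp.
    apply gen_sub. exists c, b. auto. }
  assert (NBC : forall g x, star_set B C x -> star_set B C (mul g (mul x (inv g)))).
  { apply gen_normal. intros g s [b [c [Hb [Hc E]]]]. subst s.
    replace (mul g (mul (star b c) (inv g))) with
      (mul (inv (star b g)) (star b (mul g c))).
    - apply gen_mul; [apply gen_inv|]; apply SBC; auto.
    - rewrite star_mul. gsimp. reflexivity. }
  intro a. split.
  - intro Ha. apply Ha.
    + split; [|split].
      * exists one, one. split; [apply gen_one|split;[apply gen_one|]]. gsimp. reflexivity.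
      * intros x y [y1 [z1 [Hy1 [Hz1 E1]]]] [y2 [z2 [Hy2 [Hz2 E2]]]]. subst x y.
        exists (mul y1 (mul z1 (mul y2 (inv z1)))), (mul z1 z2).
        split; [apply gen_mul; [exact Hy1| apply NBC; exact Hy2]|split; [apply gen_mul; auto|]].
        gsimp. reflexivity.
      * intros x [y [z [Hy [Hz E]]]]. subst x.
        exists (mul (inv z) (mul (inv y) (inv (inv z)))), (inv z).
        split; [apply NBC, gen_inv; auto| split; [apply gen_inv; auto|]].
        gsimp. reflexivity.
    + intros s [x [y [_ [_ E]]]]. subst s.
      destruct (HcBC x) as [b [c [Hb [Hc E]]]]. subst x.
      rewrite star_circ.
      exists (mul (star b (star c y)) (mul (star c y) (mul (star b y) (inv (star c y))))),
             (star c y).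
      split; [apply gen_mul; [apply SBC; auto| apply NBC, SBC; auto]|split;[apply SCB; auto|]].
      gsimp. reflexivity.
  - intros [y [z [Hy [Hz E]]]]. subst a.
    apply gen_mul.
    + revert Hy. apply gen_mono. intros s [b [c [_ [_ E]]]]. exists b, c. split; [exact I|split;[exact I|exact E]].
    + revert Hz. apply gen_mono. intros s [b [c [_ [_ E]]]]. exists b, c. split; [exact I|split;[exact I|exact E]].
Qed.
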